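(* Let $\alpha>0$, let $C_n=\bigl(1/\max\{i,j\}\bigr)_{i,j=1}^n$, and let $A_n=(\alpha I_n+C_n)^{-1}$ for $n\in\mathbb N$. Then each $A_n$ is Hermitian positive definite, $\inf_n\min\{|z|:z\in\sigma(A_n)\}>0$ and $\sup_n\|A_n\|_\infty<\infty$, but $\sup_n\|A_n^{-1}\|_\infty=\infty$.
   Context: $\|\cdot\|_\infty$ is the operator norm induced by the max-norm on $\mathbb C^n$ (maximum absolute row sum); $\sigma(\cdot)$ denotes the spectrum. *)

(* Defs.v *)
From HB Require Import structures.
From mathcomp Require Import all_boot all_order all_algebra.
From mathcomp Require Import all_classical all_reals.
From mathcomp.real_closed Require Import complex.
Set Implicit Arguments. Unset Strict Implicit. Unset Printing Implicit Defensive.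
Import Order.TTheory GRing.Theory Num.Theory.
Local Open Scope ring_scope.

(* C_n = (1 / max{i,j})_{i,j=1..n}; indices are 0-based in 'I_n, so the
   1-based index of i : 'I_n is i.+1. *)
Definition Cmat (R : realType) (n : nat) : 'M[R[i]]_n :=
  \matrix_(i < n, j < n) ((maxn i.+1 j.+1)%:R)^-1.

Definition Amat (R : realType) (alpha : R) (n : nat) : 'M[R[i]]_n :=
  invmx ((alpha%:C)%C%:M + Cmat R n).

Definition adjoint (R : realType) (m n : nat) (A : 'M[R[i]]_(m, n)) : 'M[R[i]]_(n, m) :=
  \matrix_(i < n, j < m) Num.conj (A j i).

Definition is_hermitian (R : realType) (n : nat) (A : 'M[R[i]]_n) : Prop :=
  adjoint A = A.

Definition is_posdef (R : realType) (n : nat) (A : 'M[R[i]]_n) : Prop :=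
  forall x : 'cV[R[i]]_n, x != 0 -> 0 < (adjoint x *m A *m x) ord0 ord0.

(* operator norm induced by the max-norm: maximum absolute row sum *)
Definition norm_inf (R : realType) (m n : nat) (A : 'M[R[i]]_(m, n)) : R :=
  \big[Num.max/0]_(i < m) \sum_(j < n) Normc.normc (A i j).

(* Main.v *)
Require Import Defs.
From HB Require Import structures.
From mathcomp Require Import all_boot all_order all_algebra.
From mathcomp Require Import all_classical all_reals.
From mathcomp.real_closed Require Import complex.
From mathcomp Require Import ring lra zify.
Import Order.TTheory GRing.Theory Num.Theory.
Local Open Scope ring_scope.
Set Implicit Arguments. Unset Strict Implicit. Unset Printing Implicit Defensive.

Section S.
Variable R : realType.
Local Notation F := (R[i]).
Variable n : nat.

Definition aa (m : nat) : F := if (m < n)%N then (m.+1%:R)^-1 else 0.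
Definition dd m := aa m - aa m.+1.
Definition SS (x : 'cV[F]_n) (m : nat) := \sum_(j < n | (j <= m)%N) x j 0.
Definition ZZ x (i : nat) := \sum_(m < n | (i <= m)%N) dd m * SS x m.

Lemma tele k : (k < n)%N -> \sum_(m < n | (k <= m)%N) dd m = aa k.
Proof.
move=> kn.
rewrite -(big_mkord (fun m => (k <= m)%N) dd).
rewrite (big_cat_nat (n:=k)) //= ?(ltnW kn) //.
rewrite big_nat_cond big1 ?add0r; last first.
  by move=> i /andP[/andP[_ ik] ki]; rewrite leqNgt ik in ki.
rewrite big_nat_cond (eq_bigl (fun i => (k <= i < n)%N)); last first.
  by move=> i; rewrite andbC andbA andbb.
rewrite -big_nat.

have -> : \sum_(k <= i < n) dd i = - \sum_(k <= i < n) (aa i.+1 - aa i).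
  by rewrite -sumrN; apply: eq_bigr => i _; rewrite /dd opprB.
rewrite telescope_sumr ?(ltnW kn) // /aa ltnn kn; ring.
Qed.


Lemma Cmat_aa (i j : 'I_n) : Cmat R n i j = aa (maxn i j).
Proof.
rewrite mxE /aa -maxnSS.
by rewrite geq_max !ltn_ord.
Qed.

Lemma KE (x : 'cV[F]_n) (i : 'I_n) : (Cmat R n *m x) i 0 = ZZ x i.
Proof.
rewrite mxE.
under eq_bigr => j _ do rewrite Cmat_aa -tele ?gtn_max ?ltn_ord // mulr_suml.
under eq_bigr => j _ do rewrite big_mkcond /=.
rewrite exchange_big /ZZ [RHS]big_mkcond /=; apply: eq_bigr => m _.
rewrite /SS.
case: (leqP i m) => im /=.
rewrite mulr_sumr [RHS]big_mkcond /=.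
  apply: eq_bigr => j _; rewrite geq_max im /=; case: ifP => //; rewrite mulr0.
by rewrite big1 // => j _; rewrite geq_max leqNgt im.
Qed.


Lemma ZZstep x (i : nat) : (i < n)%N -> ZZ x i = dd i * SS x i + ZZ x i.+1.
Proof.
move=> lin; rewrite /ZZ (bigD1 (Ordinal lin)) //=; congr (_ + _).
by apply: eq_bigl => m; rewrite ltn_neqAle andbC eq_sym.
Qed.

Lemma ZZ_ge x (i : nat) : (n <= i)%N -> ZZ x i = 0.
Proof.
move=> ni; rewrite /ZZ big1 // => m im.
by move: (leq_trans ni im); rewrite leqNgt ltn_ord.
Qed.

Lemma SSstep x (k : 'I_n) : SS x k = x k 0 + \sum_(j < n | (j < k)%N) x j 0.
Proof.
rewrite /SS (bigD1 k) //=; congr (_ + _).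
by apply: eq_bigl => m; rewrite ltn_neqAle andbC.
Qed.

Lemma dd_gt0 m : (m < n)%N -> 0 < dd m.
Proof.
move=> mn; rewrite /dd /aa mn; case: ifP => _; last by rewrite subr0 invr_gt0 ltr0n.
by rewrite subr_gt0 ltf_pV2 ?posrE ?ltr0n // ltr_nat.
Qed.

End S.

Lemma keyL (R : realType) (u v w p q : R[i]) : 0 <= p -> 0 <= q ->
  `|v| <= `|u| -> `|w| <= `|u| -> `|u| <= `|u + p * (u - v) + q * (u - w)|.
Proof.
move=> p0 q0 vu wu.
set y := _ + _ + _.
have e : (1 + p + q) * u = y + p * v + q * w by rewrite /y; ring.
have h1 : `|(1 + p + q) * u| <= `|y| + p * `|v| + q * `|w|.
  rewrite e; apply: (le_trans (ler_normD _ _)).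
  apply: lerD; last by rewrite normrM ger0_norm.
  apply: (le_trans (ler_normD _ _)); by rewrite normrM ger0_norm.
rewrite normrM ger0_norm ?addr_ge0 ?ler01 // in h1.
have h2 : p * `|v| + q * `|w| <= p * `|u| + q * `|u|.
  by rewrite lerD // ler_wpM2l.
have h3 : `|y| + p * `|v| + q * `|w| <= `|y| + (p * `|u| + q * `|u|).
  by rewrite -addrA lerD2l.
have h4 := le_trans h1 h3.
have e2 : (1 + p + q) * `|u| = `|u| + (p * `|u| + q * `|u|) by ring.
by rewrite e2 lerD2r in h4.
Qed.

Lemma exmax (T : finType) (G : numDomainType) (i0 : T) (f : T -> G) :
  (forall t, f t \is Num.real) -> exists k, forall t, f t <= f k.
Proof.
move=> hr; have [] := (@real_arg_maxP G T i0 xpredT f) => //.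
by move=> k _ H; exists k => t; apply: H.
Qed.

Section MP.
Variable R : realType.
Local Notation F := (R[i]).
Variable alpha : R.
Hypothesis ha : 0 < alpha.
Variable n : nat.
Local Notation a := ((alpha%:C)%C : F).
Local Notation B := ((alpha%:C)%C%:M + Cmat R n).

Lemma a_gt0 : 0 < a. Proof. by rewrite ltcR. Qed.

Lemma BE (x : 'cV[F]_n) j : (B *m x) j 0 = a * x j 0 + ZZ x j.
Proof. by rewrite mulmxDl mul_scalar_mx !mxE -KE mxE. Qed.

Lemma MP (x : 'cV[F]_n) (M : F) : (forall j, `|(B *m x) j 0| <= M) ->
  forall i, `|x i 0| <= 2 / a * M.
Proof.
move=> hM i.
have [k hk] := @exmax _ F i (fun k : 'I_n => `|ZZ x k|) (fun _ => normr_real _).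
have hk' : forall m : nat, `|ZZ x m| <= `|ZZ x k|.
  move=> m; case: (ltnP m n) => mn; first exact: (hk (Ordinal mn)).
  by rewrite ZZ_ge // normr0 normr_ge0.
have dk := @dd_gt0 R n k (ltn_ord k).
have Sk : SS x k = (ZZ x k - ZZ x k.+1) / dd R n k.
  by rewrite (ZZstep x (ltn_ord k)) addrK mulrAC divff ?mul1r // gt_eqF.
have [c [w [c0 [hw Pk]]]] : exists c w, 0 <= c /\ `|w| <= `|ZZ x k| /\
    - \sum_(j < n | (j < k)%N) x j 0 = c * (ZZ x k - w).
  move: (ltn_ord k) (hk' k.-1); case: (nat_of_ord k) => [|k'] /= kn hw.
    exists 0, 0; rewrite normr0 normr_ge0 lexx mul0r; split => //; split => //.
    by rewrite big1 ?oppr0 // => j; rewrite ltn0.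
  have dk' := @dd_gt0 R n k' (ltnW kn).
  exists (dd R n k')^-1, (ZZ x k'); split; first by rewrite invr_ge0 ltW.
  split => //.
  rewrite (ZZstep x (ltnW kn)) (eq_bigl (fun j : 'I_n => (j <= k')%N)) //.
  rewrite -/(SS x k'); field; by rewrite gt_eqF.
have hZ : `|ZZ x k| <= M.
  apply: le_trans (hM k); rewrite BE.
  have xk : x k 0 = SS x k - \sum_(j < n | (j < k)%N) x j 0 by rewrite SSstep addrK.
  have -> : a * x k 0 + ZZ x k = ZZ x k + (a / dd R n k) * (ZZ x k - ZZ x k.+1)
      + (a * c) * (ZZ x k - w) by rewrite xk Sk Pk; ring.
  apply: keyL => //.
  - by rewrite divr_ge0 // ltW // a_gt0.
  - by rewrite mulr_ge0 // ltW // a_gt0.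
have a0 := a_gt0.
have e : x i 0 = ((B *m x) i 0 - ZZ x i) / a.
  by rewrite BE; field; rewrite gt_eqF.
rewrite e normrM normfV (gtr0_norm a0).
have -> : 2 / a * M = (M + M) * a^-1 by ring.
apply: ler_wpM2r; first by rewrite invr_ge0 ltW.
apply: le_trans (ler_normB _ _) _.
by rewrite lerD // (le_trans (hk' i)).
Qed.


Lemma B_inj (x : 'cV[F]_n) : B *m x = 0 -> x = 0.
Proof.
move=> h; apply/matrixP => i j; rewrite (ord1 j) mxE.
apply/eqP; rewrite -normr_eq0 eq_le normr_ge0 andbT.
have := @MP x 0; rewrite mulr0; apply => l.
by rewrite h mxE normr0.
Qed.

Lemma B_sym : B^T = B.
Proof.
apply/matrixP => i j; rewrite !mxE.
by rewrite maxnC eq_sym.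
Qed.

Lemma B_unit : B \in unitmx.
Proof.
rewrite unitmxE unitfE; apply/negP => /det0P [v vn0 vB].
have : B *m v^T = 0 by rewrite -{1}B_sym -trmx_mul vB trmx0.
move/B_inj => /(congr1 trmx); rewrite trmxK trmx0 => v0.
by rewrite v0 eqxx in vn0.
Qed.

Lemma rowsum_bound (i : 'I_n) : \sum_j `|invmx B i j| <= 2 / a.
Proof.
set A := invmx B.
pose y : 'cV[F]_n := \col_j (if A i j == 0 then 0 else `|A i j| / A i j).
have hy : forall j, `|y j 0| <= 1.
  move=> j; rewrite mxE; case: eqP => h; first by rewrite normr0 ler01.
  rewrite normrM normfV normr_id divff // normr_eq0; exact/eqP.
have hB : B *m (A *m y) = y by rewrite mulmxA mulmxV ?B_unit // mul1mx.
have := @MP (A *m y) 1; rewrite mulr1 => /(_ _ i).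
have -> : (A *m y) i 0 = \sum_j `|A i j|.
  rewrite mxE; apply: eq_bigr => j _; rewrite mxE.
  case: eqP => h; first by rewrite h normr0 mulr0.
  by rewrite mulrC mulfVK //; apply/eqP.
rewrite ger0_norm ?sumr_ge0 //; apply => j; by rewrite hB.
Qed.

End MP.

Lemma adjointE (R : realType) m p (M : 'M[R[i]]_(m, p)) :
  adjoint M = map_mx Num.conj (M^T).
Proof. by apply/matrixP => i j; rewrite !mxE. Qed.

Lemma adjointM (R : realType) m p q (M : 'M[R[i]]_(m, p)) (N : 'M[R[i]]_(p, q)) :
  adjoint (M *m N) = adjoint N *m adjoint M.
Proof. by rewrite !adjointE trmx_mul map_mxM. Qed.

Section PD.
Variable R : realType.
Local Notation F := (R[i]).
Variable n : nat.

Lemma PSD (y : 'cV[F]_n) :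
  \sum_i Num.conj (y i 0) * ZZ y i =
  \sum_(m < n) dd R n m * (SS y m * Num.conj (SS y m)).
Proof.
rewrite /ZZ; under eq_bigr => i _ do rewrite mulr_sumr big_mkcond /=.
rewrite exchange_big /=; apply eq_bigr => m _.
have -> : Num.conj (SS y m) = \sum_(i < n | (i <= m)%N) Num.conj (y i 0).
  by rewrite rmorph_sum.
rewrite [in RHS]mulr_sumr [in RHS]mulr_sumr [in RHS]big_mkcond /=.
apply eq_bigr => i _; case: (i <= m)%N => //.
by rewrite mulrC mulrA.
Qed.

End PD.

Section W.
Variable R : realType.

Fixpoint ww (m : nat) : R :=
  if m is m'.+1 then ww m' * (2 * m' + 1)%N%:R / (2 * m' + 2)%N%:R else 1.

Lemma nat2p (m p : nat) : (2 * m + p)%N%:R = 2 * m%:R + p%:R :> R.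
Proof. by rewrite (natrD _ (2 * m)%N p) natrM. Qed.

Lemma ww_gt0 m : 0 < ww m.
Proof.
elim: m => [|m IH] /=; first exact: ltr01.
by rewrite mulr_gt0 ?invr_gt0 ?ltr0n ?mulr_gt0 ?addn1 ?addn2.
Qed.

Lemma ww_S m : ww m.+1 = ww m * (2 * m + 1)%N%:R / (2 * m + 2)%N%:R.
Proof. by []. Qed.

Lemma ww_le m : ww m.+1 <= ww m.
Proof.
rewrite ww_S -mulrA ler_piMr ?ltW ?ww_gt0 //.
by rewrite ltr_pdivrMr ?ltr0n ?addn2 // mul1r ltr_nat addn1.
Qed.

Lemma ww_sum k : \sum_(j < k.+1) ww j = (2 * k + 1)%N%:R * ww k.
Proof.
elim: k => [|k IH]; first by rewrite big_ord_recr big_ord0 /= add0r mul1r.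
rewrite big_ord_recr IH /=.
have h : (2 * k + 2)%N%:R != 0 :> R by rewrite pnatr_eq0 addn2.
rewrite !nat2p in h *; rewrite -(addn1 k) natrD.
by field.
Qed.

Lemma ww_diff j : ww j / (j.+1)%:R = 2 * (ww j - ww j.+1).
Proof.
rewrite ww_S.
have h : (2 * j + 2)%N%:R != 0 :> R by rewrite pnatr_eq0 addn2.
have h2 : (j.+1)%:R != 0 :> R by rewrite pnatr_eq0.
rewrite !nat2p in h *; rewrite -addn1 natrD in h2 *.
by field; rewrite h h2.
Qed.


Lemma ww_main k d : \sum_(j < (k.+1 + d)%N) ((maxn k.+1 j.+1)%:R)^-1 * ww j =
  ((2 * k + 1)%N%:R / (k.+1)%:R) * ww k + 2 * (ww k.+1 - ww (k.+1 + d)%N).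
Proof.
elim: d => [|d IH].
  rewrite addn0 subrr mulr0 addr0.
  under eq_bigr => j _ do rewrite (maxn_idPl (ltn_ord j)).
  by rewrite -mulr_sumr ww_sum; ring.
rewrite addnS big_ord_recr IH.
have -> : nat_of_ord (@ord_max (k.+1 + d)%N) = (k.+1 + d)%N by [].
rewrite (maxn_idPr _); last by lia.
rewrite [((k.+1 + d).+1%:R)^-1 * _]mulrC ww_diff.
set u := _ + 2 * (ww k.+1 - ww (k.+1 + d)).
change (u + 2 * (ww (k.+1 + d) - ww (k.+1 + d).+1) = (2 * k + 1)%N%:R / (k.+1)%:R * ww k + 2 * (ww k.+1 - ww (k.+1 + d).+1)); rewrite /u; ring.
Qed.

Lemma ww_bound n k : (k < n)%N ->
  \sum_(j < n) ((maxn k.+1 j.+1)%:R)^-1 * ww j <= 4 * ww k.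
Proof.
move=> kn; rewrite -(subnKC kn) ww_main.
have h1 : (2 * k + 1)%N%:R / (k.+1)%:R <= 2 :> R.
  rewrite ler_pdivrMr ?ltr0n // nat2p -addn1 natrD; lra.
have h2 : ww (k.+1 + (n - k.+1))%N >= 0 by exact: ltW (ww_gt0 _).
have h3 := ww_le k.
have h4 := ww_gt0 k.
have h5 : (2 * k + 1)%N%:R / (k.+1)%:R * ww k <= 2 * ww k by apply: ler_wpM2r => //; exact: ltW.
set c := (2 * k + 1)%N%:R / (k.+1)%:R in h1 h5 *.
set W := ww (k.+1 + (n - k.+1))%N in h2 *.
set V := ww k.+1 in h3 *. set U := ww k in h3 h4 h5 *.
clearbody c W V U. lra.
Qed.

End W.

Section Main.
Variable R : realType.
Local Notation F := (R[i]).
Variable alpha : R.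
Hypothesis ha : 0 < alpha.
Variable n : nat.
Local Notation a := ((alpha%:C)%C : F).
Local Notation B := ((alpha%:C)%C%:M + Cmat R n).

Lemma B_ge0 i j : 0 <= B i j.
Proof.
rewrite !mxE addr_ge0 ?invr_ge0 ?ler0n // mulrn_wge0 //.
by rewrite ltW // (a_gt0 ha).
Qed.

Lemma B_adj : adjoint B = B.
Proof.
apply/matrixP => i j; rewrite !mxE geC0_conj; first by rewrite eq_sym maxnC.
rewrite addr_ge0 ?invr_ge0 ?ler0n // mulrn_wge0 //.
by rewrite ltW // (a_gt0 ha).
Qed.

Lemma A_herm : is_hermitian (Amat alpha n).
Proof.
rewrite /is_hermitian /Amat adjointE trmx_inv map_invmx -adjointE.
by rewrite B_adj.
Qed.


Lemma A_pd : is_posdef (Amat alpha n).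
Proof.
move=> x xn0; set A := Amat alpha n; set y := A *m x.
have hx : x = B *m y by rewrite /y mulmxA mulmxV ?(B_unit ha) // mul1mx.
have yn0 : y != 0 by apply: contraNneq xn0 => y0; rewrite hx y0 mulmx0.
rewrite -mulmxA -/y {1}hx adjointM B_adj -mulmxA mxE.
under eq_bigr => i _ do rewrite BE mxE mulrDr.
rewrite big_split /= PSD.
have cy : forall i, Num.conj (y i 0) * (a * y i 0) = a * `|y i 0| ^+ 2.
  by move=> i; rewrite normCKC mulrCA.
under eq_bigr => i _ do rewrite cy.
rewrite -mulr_sumr ltr_wpDr //.
  by apply: sumr_ge0 => m _; rewrite mulr_ge0 ?mul_conjC_ge0 // ltW // dd_gt0.
rewrite mulr_gt0 ?(a_gt0 ha) //.
have : ~~ [forall i, y i 0 == 0].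
  apply: contra yn0 => /forallP h; apply/eqP/matrixP => i j.
  by rewrite (ord1 j) [in RHS]mxE (eqP (h i)).
rewrite negb_forall => /existsP [i0 hi0].
rewrite (bigD1 i0) //= ltr_wpDr ?exprn_gt0 ?normr_gt0 //.
by apply: sumr_ge0 => i _; rewrite exprn_ge0.
Qed.


Lemma A_norm : norm_inf (Amat alpha n) <= 2 / alpha.
Proof.
rewrite /norm_inf; apply: bigmax_le => [|i _].
  by rewrite divr_ge0 ?ler0n ?ltW.
have h := rowsum_bound ha i.
rewrite -lecR.
have -> : ((\sum_j Normc.normc (Amat alpha n i j))%:C)%C = \sum_j `|Amat alpha n i j|.
  by rewrite rmorph_sum.
have -> : ((2 / alpha)%:C)%C = 2 / a by rewrite fmorph_div rmorph_nat.
exact: h.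
Qed.


Lemma B_eig (x : 'cV[F]_n) (mu : F) : x != 0 -> B *m x = mu *: x -> `|mu| <= a + 4.
Proof.
move=> xn0 hB.
pose wC j : F := ((ww R j)%:C)%C.
have wC_gt0 j : 0 < wC j by rewrite ltcR ww_gt0.
have [i0 | n0] := boolP (0 < n)%N; last first.
  case/eqP: xn0; apply/matrixP => i j; exfalso; move: (ltn_ord i).
  by move: n0 (nat_of_ord i); rewrite lt0n negbK => /eqP -> m.
pose i00 := Ordinal i0.
have [k hk] := @exmax _ F i00 (fun j => `|x j 0| / wC j)
   (fun j => ger0_real (divr_ge0 (normr_ge0 _) (ltW (wC_gt0 j)))).
set t := `|x k 0| / wC k in hk.
have hxj j : `|x j 0| <= wC j * t.
  by have := hk j; rewrite ler_pdivrMr // mulrC.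
have hw : \sum_(j < n) Cmat R n k j * wC j <= 4 * wC k.
  have e : \sum_(j < n) Cmat R n k j * wC j =
     ((\sum_(j < n) ((maxn k.+1 j.+1)%:R)^-1 * ww R j)%:C)%C.
    by rewrite rmorph_sum; apply: eq_bigr => j _; rewrite mxE rmorphM fmorphV rmorph_nat.
  rewrite e /wC -[4]/(4%:R) -(rmorph_nat (real_complex R)) -rmorphM lecR.
  exact: ww_bound.
have eq1 : (mu - a) * x k 0 = \sum_(j < n) Cmat R n k j * x j 0.
  have := congr1 (fun M : 'cV[F]_n => M k 0) hB; rewrite mulmxDl mul_scalar_mx !mxE => h.
  rewrite mulrBl -h; ring.
have Cge0 j : 0 <= Cmat R n k j by rewrite mxE invr_ge0 ler0n.
have h2 : `|mu - a| * `|x k 0| <= 4 * (wC k * t).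
  rewrite -normrM eq1; apply: le_trans (ler_norm_sum _ _ _) _.
  apply: le_trans (_ : \sum_(j < n) Cmat R n k j * wC j * t <= _).
    apply: ler_sum => j _; rewrite normrM (ger0_norm (Cge0 j)) -mulrA.
    by apply: ler_wpM2l.
  rewrite -mulr_suml mulrA; apply: ler_wpM2r => //.
  by rewrite /t divr_ge0 ?normr_ge0 // ltW.
have ewt : wC k * t = `|x k 0| by rewrite /t mulrC mulfVK // gt_eqF.
rewrite ewt in h2.
have xk0 : 0 < `|x k 0|.
  rewrite lt_def normr_ge0 andbT normr_eq0; apply: contra xn0 => /eqP xk.
  have t0 : t = 0 by rewrite /t xk normr0 mul0r.
  apply/eqP/matrixP => j l; rewrite (ord1 l) mxE.
  by apply/eqP; rewrite -normr_eq0 eq_le normr_ge0 andbT -(mulr0 (wC j)) -t0.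
rewrite ler_pM2r // in h2.
apply: le_trans (_ : `|mu - a| + `|a| <= _).
  by rewrite -{1}(subrK a mu) ler_normD.
by rewrite addrC (gtr0_norm (a_gt0 ha)) lerD2l.
Qed.

Lemma A_eig z : eigenvalue (Amat alpha n) z -> (((1 / (alpha + 4))%:C)%C : F) <= `|z|.
Proof.
case/eigenvalueP => v hv vn0.
have hAB : invmx B *m B = 1%:M := mulVmx (B_unit ha n).
have e : v = z *: (v *m B).
  by rewrite scalemxAl -hv -mulmxA /Amat hAB mulmx1.
have zn0 : z != 0.
  by apply: contraNneq vn0 => z0; rewrite e z0 scale0r.
have ev : B *m v^T = z^-1 *: v^T.
  rewrite -{1}B_sym -trmx_mul.
  have -> : v *m B = z^-1 *: v by rewrite {2}e scalerA mulVf // scale1r.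
  by apply/matrixP => i j; rewrite !mxE.
have vt0 : v^T != 0 by apply: contraNneq vn0 => h0; rewrite -(trmxK v) h0 trmx0.
have := B_eig vt0 ev; rewrite normfV => h.
have -> : (((1 / (alpha + 4))%:C)%C : F) = (a + 4)^-1.
  by rewrite fmorph_div rmorph1 rmorphD rmorph_nat div1r.
have a4 : 0 < a + 4 by rewrite addr_gt0 ?(a_gt0 ha) ?ltr0n.
have zp : 0 < `|z| by rewrite normr_gt0.
by rewrite -[`|z|]invrK lef_pV2 ?posrE ?invr_gt0.
Qed.

Lemma normB_row (i0 : 'I_n) : nat_of_ord i0 = 0%N ->
  \sum_(j < n) ((j.+1)%:R)^-1 <= norm_inf B.
Proof.
move=> h0; rewrite /norm_inf.
apply: le_trans (le_bigmax 0 (fun i => \sum_(j < n) Normc.normc (B i j)) i0).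
rewrite -lecR !rmorph_sum; apply: ler_sum => j _ /=.
apply: le_trans (_ : B i0 j <= _); last exact: (real_ler_norm (ger0_real (B_ge0 i0 j))).
rewrite [X in _ <= X]mxE [X in _ <= _ + X]mxE h0 (maxn_idPr _) // fmorphV rmorph_nat.
by rewrite lerDr mxE mulrn_wge0 // ltW // (a_gt0 ha).
Qed.

End Main.

Lemma harm2 (R : realType) k : (k%:R / 2 : R) <= \sum_(j < 2 ^ k) ((j.+1)%:R)^-1.
Proof.
elim: k => [|k IH].
  by rewrite mul0r sumr_ge0 // => j _; rewrite invr_ge0 ler0n.
rewrite expnS mul2n -addnn big_split_ord /=.
have h2 : (1 / 2 : R) <= \sum_(i < 2 ^ k) ((rshift (2 ^ k) i).+1%:R)^-1.
  apply: le_trans (_ : \sum_(i < 2 ^ k) ((2 ^ k + 2 ^ k)%N%:R)^-1 <= _).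
    rewrite sumr_const card_ord -mulr_natr addnn -mul2n natrM.
    have hp : (2 ^ k)%N%:R != 0 :> R by rewrite pnatr_eq0 expn_eq0.
    by rewrite le_eqVlt; apply/orP; left; apply/eqP; field.
  apply: ler_sum => i _ /=.
  rewrite lef_pV2 ?posrE ?ltr0n ?addn_gt0 ?expn_gt0 // ler_nat.
  by rewrite -addnS leq_add2l ltn_ord.
have -> : (k.+1%:R / 2 : R) = k%:R / 2 + 1 / 2 by rewrite -addn1 natrD; field.
by apply: lerD.
Qed.


Theorem proposition9 (R : realType) (alpha : R) (halpha : 0 < alpha) :
  (forall n : nat, (0 < n)%N -> is_hermitian (Amat alpha n) /\ is_posdef (Amat alpha n)) /\
  (exists delta : R, 0 < delta /\
     forall n : nat, (0 < n)%N ->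
       forall z : R[i], eigenvalue (Amat alpha n) z -> (delta%:C)%C <= `|z|) /\
  (exists M : R, forall n : nat, (0 < n)%N -> norm_inf (Amat alpha n) <= M) /\
  (forall M : R, exists n : nat, (0 < n)%N /\ M < norm_inf (invmx (Amat alpha n))).
Proof.
split.
  by move=> n _; split; [exact: A_herm | exact: (A_pd halpha)].
split.
  exists (1 / (alpha + 4)); split; first by rewrite divr_gt0 // addr_gt0.
  by move=> n _ z hz; exact: (A_eig halpha hz).
split.
  by exists (2 / alpha) => n _; exact: (A_norm halpha).
move=> M.
have hb := @archi_boundP R (2 * `|M|) (mulr_ge0 (ler0n _ 2) (normr_ge0 M)).
set N := Num.Def.archi_bound _ in hb.
have p0 : (0 < 2 ^ N)%N by rewrite expn_gt0.
exists (2 ^ N)%N; split => //.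
rewrite /Amat invmxK.
apply: (lt_le_trans _ (@normB_row R alpha halpha (2 ^ N)%N (Ordinal p0) erefl)).
apply: (lt_le_trans _ (harm2 R N)).
have := real_ler_norm (num_real M).
clear -hb; move: (N%:R : R) hb => t hb hM; lra.
Qed.
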